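(* Consider a finite reward-free MDP with occupancy polytope $\Phi$, let $d_e^\star\in\Phi$ and $\delta>0$, and define $\mathcal K_\delta:=\{\tilde r\in\Delta(S\times A):\mathrm{subopt}(\tilde r,d_e^\star)\ge\delta\}$. Suppose that for every $\bar r\in\mathcal K_\delta$ there exist $r_{\bar r}\in\mathcal R(d_e^\star)$ and a demonstrator pair $(d_{\bar r},\epsilon_{\bar r})$ with $d_{\bar r}\in\Phi$, $\epsilon_{\bar r}\ge0$, such that \[(\bar r-r_{\bar r})^\top(d_e^\star-d_{\bar r})>0,\qquad \mathrm{subopt}(r_{\bar r},d_{\bar r})\in[\epsilon_{\bar r}-\delta,\epsilon_{\bar r}].\] Then there exists a finite subset $\{\bar r_i\}_{i=1}^N\subseteq\mathcal K_\delta$ such that for every $\tilde r\in\mathcal K_\delta$ there is $i\in[N]$ with \[(\tilde r-r_{\bar r_i})^\top(d_e^\star-d_{\bar r_i})>0\quad\text{and}\quad\mathrm{subopt}(r_{\bar r_i},d_{\bar r_i})\in[\epsilon_{\bar r_i}-\delta,\epsilon_{\bar r_i}].\] In particular, this holds for every $\tilde r\in\Delta(S\times A)$ with $\mathrm{subopt}(\tilde r,d_e^\star)>\delta$, i.e. the finite collection $\{(d_{\bar r_i},\epsilon_{\bar r_i})\}_{i=1}^N$ satisfies this pointwise condition.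
   Context: The MDP has finite $S$, $A$, transitions $P$, initial distribution $\mu_0$, discount $\gamma\in(0,1)$; $(Md)(s)=\sum_a d(s,a)-\gamma\sum_{s',a'}P(s\mid s',a')d(s',a')$ and $\Phi=\{d\ge0:Md=(1-\gamma)\mu_0\}$. Rewards are $r\in\Delta(S\times A)$. $\mathrm{subopt}(r,d):=\max_{\tilde d\in\Phi}r^\top\tilde d-r^\top d$; $\mathcal R(d_e^\star):=\{r\in\Delta(S\times A):\mathrm{subopt}(r,d_e^\star)=0\}$. *)

(* Defs.v *)
From HB Require Import structures.
From mathcomp Require Import all_boot all_order all_algebra.
From mathcomp Require Import all_classical all_reals.
Set Implicit Arguments. Unset Strict Implicit. Unset Printing Implicit Defensive.
Import Order.TTheory GRing.Theory Num.Theory.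
Local Open Scope ring_scope.
Local Open Scope classical_set_scope.

Section MDP.
Variables (R : realType) (S A : finType).
(* P s s' a' = P(s | s', a') *)
Variables (P : S -> S -> A -> R) (mu0 : S -> R) (gamma : R).

Definition Mop (d : S -> A -> R) (s : S) : R :=
  \sum_(a : A) d s a - gamma * \sum_(s' : S) \sum_(a' : A) P s s' a' * d s' a'.

Definition Phi : set (S -> A -> R) :=
  [set d | (forall s a, 0 <= d s a) /\ forall s, Mop d s = (1 - gamma) * mu0 s].

Definition inner (r d : S -> A -> R) : R := \sum_(s : S) \sum_(a : A) r s a * d s a.

Definition simplexR (r : S -> A -> R) : Prop :=
  (forall s a, 0 <= r s a) /\ \sum_(s : S) \sum_(a : A) r s a = 1.

Definition subopt (r d : S -> A -> R) : R :=
  sup [set inner r x | x in Phi] - inner r d.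

Definition Rset (de : S -> A -> R) : set (S -> A -> R) :=
  [set r | simplexR r /\ subopt r de = 0].

Definition Kdelta (de : S -> A -> R) (delta : R) : set (S -> A -> R) :=
  [set r | simplexR r /\ delta <= subopt r de].

Definition rsub (r1 r2 : S -> A -> R) : S -> A -> R := fun s a => r1 s a - r2 s a.
Definition dsub (d1 d2 : S -> A -> R) : S -> A -> R := fun s a => d1 s a - d2 s a.
End MDP.

(* Main.v *)
Require Import Defs.
From HB Require Import structures.
From mathcomp Require Import all_boot all_order all_algebra.
From mathcomp Require Import all_classical all_reals all_analysis.
From mathcomp Require Import ring lra.
Set Implicit Arguments. Unset Strict Implicit. Unset Printing Implicit Defensive.
Import Order.TTheory GRing.Theory Num.Theory.
Import numFieldNormedType.Exports.
Local Open Scope ring_scope.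
Local Open Scope classical_set_scope.

Definition tofun (R : realType) (S A : finType) (v : 'rV[R]_#|{: S * A}|) : S -> A -> R :=
  fun s a => v ord0 (enum_rank (s, a)).
Definition torow (R : realType) (S A : finType) (r : S -> A -> R) : 'rV[R]_#|{: S * A}| :=
  \row_i r (enum_val i).1 (enum_val i).2.

Lemma tofunK (R : realType) (S A : finType) (r : S -> A -> R) : tofun (torow r) = r.
Proof. by apply/funext => s; apply/funext => a; rewrite /tofun mxE enum_rankK. Qed.

Lemma coord_le (R : realType) (S A : finType) (v : 'rV[R]_#|{: S * A}|) s a :
  `|tofun v s a| <= `|v|.
Proof.
rewrite [leRHS]/Num.norm /= mx_normrE; apply/bigmax_geP; right => /=.
by exists (ord0, enum_rank (s, a)).
Qed.

Lemma lip_cont (R : realType) n (h : 'rV[R]_n -> R) (L : R) : 0 <= L ->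
  (forall p q, `|h p - h q| <= L * `|p - q|) -> continuous h.
Proof.
move=> L0 hL x; apply/(@cvgrPdist_lt _ _ _ (nbhs x) (nbhs_filter x)) => e e0; near=> z.
have L1 : 0 < L + 1 by rewrite ltr_wpDl.
apply: (le_lt_trans (hL _ _)).
apply: (@le_lt_trans _ _ ((L + 1) * `|x - z|)).
  by rewrite ler_wpM2r // lerDl.
rewrite -ltr_pdivlMl//.
near: z; apply: (@cvgr_dist_lt _ _ _ (nbhs x) (nbhs_filter x) id x).
  exact: cvg_id.
by apply: mulr_gt0 => //; rewrite invr_gt0 ltr_wpDl.
Unshelve. all: by end_near. Qed.


Lemma inner_bound (R : realType) (S A : finType) (r x : S -> A -> R) (M : R) :
  (forall s a, `|r s a| <= M) ->
  `|inner r x| <= M * \sum_(s : S) \sum_(a : A) `|x s a|.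
Proof.
move=> hM; rewrite /inner mulr_sumr.
apply: le_trans (ler_norm_sum _ _ _) _; apply: ler_sum => s _.
rewrite mulr_sumr; apply: le_trans (ler_norm_sum _ _ _) _; apply: ler_sum => a _.
by rewrite normrM ler_wpM2r.
Qed.

Lemma inner_diff (R : realType) (S A : finType) (v w : 'rV[R]_#|{: S * A}|) c :
  inner (tofun v) c - inner (tofun w) c = inner (tofun (v - w)) c.
Proof.
rewrite /inner -sumrB; apply: eq_bigr => s _; rewrite -sumrB; apply: eq_bigr => a _.
by rewrite /tofun !mxE mulrBl.
Qed.

Lemma inner_diff2 (R : realType) (S A : finType) (v w : 'rV[R]_#|{: S * A}|) k c :
  inner (rsub (tofun v) k) c - inner (rsub (tofun w) k) c = inner (tofun (v - w)) c.
Proof.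
rewrite /inner -sumrB; apply: eq_bigr => s _; rewrite -sumrB; apply: eq_bigr => a _.
rewrite /tofun /rsub !mxE; ring.
Qed.

Lemma inner_lip (R : realType) (S A : finType) (v w : 'rV[R]_#|{: S * A}|) c :
  `|inner (tofun v) c - inner (tofun w) c| <=
     (\sum_(s : S) \sum_(a : A) `|c s a|) * `|v - w|.
Proof. by rewrite inner_diff mulrC; apply: inner_bound => s a; apply: coord_le. Qed.

Lemma inner_lip2 (R : realType) (S A : finType) (v w : 'rV[R]_#|{: S * A}|) k c :
  `|inner (rsub (tofun v) k) c - inner (rsub (tofun w) k) c| <=
     (\sum_(s : S) \sum_(a : A) `|c s a|) * `|v - w|.
Proof. by rewrite inner_diff2 mulrC; apply: inner_bound => s a; apply: coord_le. Qed.

Lemma Phi_sum1 (R : realType) (S A : finType)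
  (P : S -> S -> A -> R) (mu0 : S -> R) (gamma : R)
  (hP1 : forall s' a', \sum_(s : S) P s s' a' = 1)
  (hmu1 : \sum_(s : S) mu0 s = 1) (hg1 : gamma < 1) x :
  Phi P mu0 gamma x -> \sum_(s : S) \sum_(a : A) x s a = 1.
Proof.
move=> [_ hM].
have E : \sum_(s : S) Mop P gamma x s =
   (1 - gamma) * \sum_(s : S) \sum_(a : A) x s a.
  rewrite /Mop sumrB -mulr_sumr mulrBl mul1r; congr (_ - gamma * _).
  rewrite exchange_big /=; apply: eq_bigr => s' _; rewrite exchange_big /=.
  by apply: eq_bigr => a' _; rewrite -mulr_suml hP1 mul1r.
have E2 : \sum_(s : S) Mop P gamma x s = (1 - gamma) * 1.
  by rewrite (eq_bigr _ (fun s _ => hM s)) -mulr_sumr hmu1.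
apply: (mulfI (x := 1 - gamma)); first by rewrite subr_eq0 gt_eqF.
by rewrite -E -E2.
Qed.

Lemma Phi_abs (R : realType) (S A : finType)
  (P : S -> S -> A -> R) (mu0 : S -> R) (gamma : R)
  (hP1 : forall s' a', \sum_(s : S) P s s' a' = 1)
  (hmu1 : \sum_(s : S) mu0 s = 1) (hg1 : gamma < 1) x :
  Phi P mu0 gamma x -> \sum_(s : S) \sum_(a : A) `|x s a| = 1.
Proof.
move=> hx; rewrite -(Phi_sum1 hP1 hmu1 hg1 hx).
case: hx => h0 _; apply: eq_bigr => s _; apply: eq_bigr => a _.
by rewrite ger0_norm.
Qed.

Lemma has_sup_E (R : realType) (S A : finType)
  (P : S -> S -> A -> R) (mu0 : S -> R) (gamma : R)
  (hP1 : forall s' a', \sum_(s : S) P s s' a' = 1)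
  (hmu1 : \sum_(s : S) mu0 s = 1) (hg1 : gamma < 1) de
  (hde : Phi P mu0 gamma de) (w : 'rV[R]_#|{: S * A}|) :
  has_sup [set inner (tofun w) x | x in Phi P mu0 gamma].
Proof.
split; first by exists (inner (tofun w) de); exists de.
exists `|w|; move=> _ [x hx <-].
apply: le_trans (ler_norm _) _.
apply: le_trans (inner_bound _ (fun s a => coord_le w s a)) _.
by rewrite (Phi_abs hP1 hmu1 hg1 hx) mulr1.
Qed.

Lemma sup_lip (R : realType) (S A : finType)
  (P : S -> S -> A -> R) (mu0 : S -> R) (gamma : R)
  (hP1 : forall s' a', \sum_(s : S) P s s' a' = 1)
  (hmu1 : \sum_(s : S) mu0 s = 1) (hg1 : gamma < 1) de
  (hde : Phi P mu0 gamma de) (v w : 'rV[R]_#|{: S * A}|) :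
  sup [set inner (tofun v) x | x in Phi P mu0 gamma] <=
  sup [set inner (tofun w) x | x in Phi P mu0 gamma] + `|v - w|.
Proof.
apply: ge_sup; first by exists (inner (tofun v) de); exists de.
move=> _ [x hx <-].
have h1 := inner_lip v w x; rewrite (Phi_abs hP1 hmu1 hg1 hx) mul1r in h1.
have h2 : inner (tofun w) x <= sup [set inner (tofun w) x | x in Phi P mu0 gamma].
  by apply: sup_upper_bound; [exact: (has_sup_E hP1 hmu1 hg1 hde)| exists x].
move: h1; rewrite ler_norml => /andP[_ h1].
by rewrite -lerBlDl (le_trans _ h1) // lerB.
Qed.

Lemma subopt_lip (R : realType) (S A : finType)
  (P : S -> S -> A -> R) (mu0 : S -> R) (gamma : R)
  (hP1 : forall s' a', \sum_(s : S) P s s' a' = 1)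
  (hmu1 : \sum_(s : S) mu0 s = 1) (hg1 : gamma < 1) de
  (hde : Phi P mu0 gamma de) (v w : 'rV[R]_#|{: S * A}|) :
  `|subopt P mu0 gamma (tofun v) de - subopt P mu0 gamma (tofun w) de| <= 2 * `|v - w|.
Proof.
rewrite /subopt.
set sv := sup _; set sw := sup _.
have h1 : sv <= sw + `|v - w| by exact: (sup_lip hP1 hmu1 hg1 hde v w).
have h2 : sw <= sv + `|v - w| by rewrite (distrC v w); exact: (sup_lip hP1 hmu1 hg1 hde w v).
have h3 := inner_lip v w de; rewrite (Phi_abs hP1 hmu1 hg1 hde) mul1r in h3.
move: h3; rewrite ler_norml => /andP[h3 h4].
rewrite ler_norml; apply/andP; split; lra.
Qed.

Lemma le_sum_item (R : realType) (S A : finType) (x : S -> A -> R) s a :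
  (forall s a, 0 <= x s a) -> x s a <= \sum_(s : S) \sum_(a : A) x s a.
Proof.
move=> h0; rewrite (bigD1 s) //= (bigD1 a) //= -addrA lerDl.
by apply: addr_ge0; apply: sumr_ge0 => i _ //; apply: sumr_ge0.
Qed.

Lemma K_compact (R : realType) (S A : finType)
  (P : S -> S -> A -> R) (mu0 : S -> R) (gamma : R)
  (hP1 : forall s' a', \sum_(s : S) P s s' a' = 1)
  (hmu1 : \sum_(s : S) mu0 s = 1) (hg1 : gamma < 1)
  (de : S -> A -> R) (hde : Phi P mu0 gamma de) (delta : R) :
  compact [set v : 'rV[R]_#|{: S * A}| | Kdelta P mu0 gamma de delta (tofun v)].
Proof.
set K' := [set v | _].
apply: bounded_closed_compact.
  exists 1; split; first by rewrite real1.
  move=> M M1 v [[h0 h1] _]; apply: le_trans (ltW M1).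
  rewrite /Num.norm /= mx_normrE; apply/bigmax_leP; split => //= -[i j] _ /=.
  rewrite (ord1 i).
  have -> : v ord0 j = tofun v (enum_val j).1 (enum_val j).2.
    by rewrite /tofun -surjective_pairing enum_valK.
  rewrite ger0_norm //; rewrite -h1; exact: le_sum_item.
have clsub : forall C, K' `<=` C -> closed C -> closure K' `<=` C.
  by move=> C sub cl p clp; apply: cl; apply: (closureS sub).
move=> p clp; split; first split.
- move=> s a.
  apply: (clsub ((fun v : 'rV[R]_#|{: S * A}| => v ord0 (enum_rank (s, a))) @^-1` [set x | 0 <= x])) => //.
    by move=> v [[h0 _] _]; exact: h0 s a.
  apply: preimage_closed; last exact: closed_ge.
  by move=> y _; exact: coord_continuous.
- pose sumf (v : 'rV[R]_#|{: S * A}|) := inner (tofun v) (fun _ _ => 1).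
  have sE : forall v, sumf v = \sum_(s : S) \sum_(a : A) tofun v s a.
    by move=> v; apply: eq_bigr => s _; apply: eq_bigr => a _; rewrite mulr1.
  rewrite -sE.
  apply: (clsub (sumf @^-1` [set x | x = 1])) => //.
    by move=> v [[_ h1] _]; rewrite /= sE.
  apply: preimage_closed; last exact: closed_eq.
  move=> y _; apply: (@lip_cont _ _ _ (\sum_(s : S) \sum_(a : A) `|(1 : R)|)).
    by apply: sumr_ge0 => s _; apply: sumr_ge0.
  by move=> v w; exact: inner_lip.
- apply: (clsub ((fun v : 'rV[R]_#|{: S * A}| => subopt P mu0 gamma (tofun v) de) @^-1` [set x | delta <= x])) => //.
    by move=> v [_ h].
  apply: preimage_closed; last exact: closed_ge.
  move=> y _; apply: (@lip_cont _ _ _ 2) => //.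
  by move=> v w; exact: (subopt_lip hP1 hmu1 hg1 hde).
Qed.

Theorem mainTheorem9 (R : realType) (S A : finType)
  (P : S -> S -> A -> R) (mu0 : S -> R) (gamma : R)
  (hP0 : forall s s' a', 0 <= P s s' a')
  (hP1 : forall s' a', \sum_(s : S) P s s' a' = 1)
  (hmu0 : forall s, 0 <= mu0 s) (hmu1 : \sum_(s : S) mu0 s = 1)
  (hg0 : 0 < gamma) (hg1 : gamma < 1)
  (de : S -> A -> R) (hde : Phi P mu0 gamma de)
  (delta : R) (hdelta : 0 < delta)
  (rf : (S -> A -> R) -> (S -> A -> R))
  (df : (S -> A -> R) -> (S -> A -> R))
  (epsf : (S -> A -> R) -> R)
  (hyp : forall rb, Kdelta P mu0 gamma de delta rb ->
     Rset P mu0 gamma de (rf rb) /\ Phi P mu0 gamma (df rb) /\ 0 <= epsf rb /\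
     0 < inner (rsub rb (rf rb)) (dsub de (df rb)) /\
     epsf rb - delta <= subopt P mu0 gamma (rf rb) (df rb) <= epsf rb) :
  exists rs : seq (S -> A -> R),
    (forall rb, rb \in rs -> Kdelta P mu0 gamma de delta rb) /\
    (forall rt, Kdelta P mu0 gamma de delta rt ->
       exists2 rb, rb \in rs &
         0 < inner (rsub rt (rf rb)) (dsub de (df rb)) /\
         epsf rb - delta <= subopt P mu0 gamma (rf rb) (df rb) <= epsf rb) /\
    (forall rt, simplexR rt -> delta < subopt P mu0 gamma rt de ->
       exists2 rb, rb \in rs &
         0 < inner (rsub rt (rf rb)) (dsub de (df rb)) /\
         epsf rb - delta <= subopt P mu0 gamma (rf rb) (df rb) <= epsf rb).
Proof.
have Kc := @K_compact R S A P mu0 gamma hP1 hmu1 hg1 de hde delta.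
set K' := [set v | _] in Kc.
rewrite compact_cover in Kc.
pose O (u : 'rV[R]_#|{: S * A}|) :=
  (fun w : 'rV[R]_#|{: S * A}| =>
     inner (rsub (tofun w) (rf (tofun u))) (dsub de (df (tofun u)))) @^-1` [set x | 0 < x].
have Oop : forall u, K' u -> open (O u).
  move=> u _; apply: open_comp; last exact: open_gt.
  move=> y _; apply: (@lip_cont _ _ _
     (\sum_(s : S) \sum_(a : A) `|dsub de (df (tofun u)) s a|)).
    by apply: sumr_ge0 => s _; apply: sumr_ge0.
  by move=> v w; exact: inner_lip2.
have Kcov : K' `<=` cover K' O.
  by move=> v Kv; exists v => //; exact: (hyp _ Kv).2.2.2.1.
have [D' subD cov] := Kc _ K' O Oop Kcov.
have main : forall rt, Kdelta P mu0 gamma de delta rt ->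
       exists2 rb, rb \in [seq tofun u | u <- finmap.enum_fset D'] &
         0 < inner (rsub rt (rf rb)) (dsub de (df rb)) /\
         epsf rb - delta <= subopt P mu0 gamma (rf rb) (df rb) <= epsf rb.
  move=> rt Krt.
  have Kv : K' (torow rt) by rewrite /K' /= tofunK.
  have [u uD Ou] := cov _ Kv.
  exists (tofun u); first exact: map_f.
  split; first by move: Ou; rewrite /O /= tofunK.
  exact: (hyp _ (set_mem (subD _ uD))).2.2.2.2.
exists [seq tofun u | u <- finmap.enum_fset D']; split; last split.
- by move=> rb /mapP [u uD ->]; exact: (set_mem (subD _ uD)).
- exact: main.
- by move=> rt srt lt; apply: main; split => //; exact: ltW.
Qed.
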